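(* For both \textsc{OneMinMax} and \textsc{LOTZ}, the hypervolume contribution $\mathrm{HVC}(x,P)$ with a reference point $(r_1,r_2)$ satisfying $r_1\le -1$ and $r_2\le -1$ is diversity-favouring on $\{0,1\}^n\setminus\{0^n,1^n\}$.
   Context: Search space $\{0,1\}^n$; objectives maximised. $\textsc{OneMinMax}(x)=(\sum_ix_i,\,n-\sum_ix_i)$; $\textsc{LOTZ}(x)=(\mathrm{LO}(x),\mathrm{TZ}(x))$ with $\mathrm{LO}$ the number of leading ones and $\mathrm{TZ}$ the number of trailing zeros. Dominance: $y$ dominates $x$ if $f_i(y)\ge f_i(x)$ for all $i$, strictly for some $i$. Pareto set $X^*$ (non-dominated points), Pareto front $F^*=f(X^* )$. Populations $P$ are sets of mutually non-dominated points with distinct objective vectors (as maintained by SEMO/GSEMO). HVC: sort $P$ by increasing $f_1$ as $x_1,\dots,x_\mu$, set $f_1(x_0)=r_1$, $f_2(x_{\mu+1})=r_2$, and $\mathrm{HVC}(x_i,P)=(f_1(x_i)-f_1(x_{i-1}))(f_2(x_i)-f_2(x_{i+1}))$. Good: w.r.t. $P$, $x\in P\cap X^*$ is good if some Hamming neighbour $y$ of $x$ satisfies $y\in X^*$ and $f(y)\notin f(P)$; otherwise bad. A measure $\mathrm{score}(x,P)$ is diversity-favouring on $S\subseteq\{0,1\}^n$ (w.r.t. $f$) if for every population $P$ and all $x,y\in P\cap X^*\cap S$ with $x$ bad and $y$ good, $\mathrm{score}(x,P)<\mathrm{score}(y,P)$. *)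

(* Defs.v *)
From mathcomp Require Import all_boot all_order all_algebra.
Set Implicit Arguments. Unset Strict Implicit. Unset Printing Implicit Defensive.
Import Order.TTheory GRing.Theory Num.Theory.

Notation bs n := {ffun 'I_n -> bool}.

Definition bits n (x : bs n) : seq bool := [seq x i | i <- enum 'I_n].

Definition ones n (x : bs n) : nat := count id (bits x).

Definition OneMinMax n (x : bs n) : nat * nat := (ones x, n - ones x).

Definition LO n (x : bs n) : nat := find negb (bits x).
Definition TZ n (x : bs n) : nat := find id (rev (bits x)).
Definition LOTZ n (x : bs n) : nat * nat := (LO x, TZ x).

Section Dom.
Variable n : nat.
Variable f : bs n -> nat * nat.

Definition dominates (y x : bs n) : bool :=
  [&& (f x).1 <= (f y).1, (f x).2 <= (f y).2 &
      ((f x).1 < (f y).1) || ((f x).2 < (f y).2)]%N.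

Definition pareto (x : bs n) : bool := [forall y, ~~ dominates y x].

Definition valid_pop (P : {set bs n}) : Prop :=
  (forall x y, x \in P -> y \in P -> ~~ dominates x y) /\
  (forall x y, x \in P -> y \in P -> f x = f y -> x = y).

Definition hamming_neighbour (x y : bs n) : bool :=
  #|[set i | x i != y i]| == 1%N.

Definition good (P : {set bs n}) (x : bs n) : Prop :=
  [/\ x \in P, pareto x &
   exists y, [/\ hamming_neighbour x y, pareto y & f y \notin [seq f z | z in P]]].

Definition bad (P : {set bs n}) (x : bs n) : Prop :=
  [/\ x \in P, pareto x & ~ good P x].

Definition diversity_favouring {R : numDomainType}
    (score : bs n -> {set bs n} -> R) (S : pred (bs n)) : Prop :=
  forall P : {set bs n}, valid_pop P ->
  forall x y : bs n, x \in P -> y \in P -> pareto x -> pareto y ->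
    x \in S -> y \in S -> bad P x -> good P y ->
    (score x P < score y P)%R.

(* Hypervolume contribution with reference point (r1, r2).
   x_{i-1}: element of P with the largest f_1 value below f_1(x) (if none, f_1(x_0) = r1);
   x_{i+1}: element of P with the smallest f_1 value above f_1(x) (if none, f_2(x_{mu+1}) = r2). *)
Definition HVC {R : numDomainType} (r1 r2 : R) (x : bs n) (P : {set bs n}) : R :=
  let prev1 : R :=
    match [pick y in P | ((f y).1 < (f x).1)%N &&
             [forall z in P, ((f z).1 < (f x).1)%N ==> ((f z).1 <= (f y).1)%N]] with
    | Some y => ((f y).1)%:R%R
    | None => r1
    end in
  let next2 : R :=
    match [pick y in P | ((f x).1 < (f y).1)%N &&
             [forall z in P, ((f x).1 < (f z).1)%N ==> ((f y).1 <= (f z).1)%N]] with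
    | Some y => ((f y).2)%:R%R
    | None => r2
    end in
  ((((f x).1)%:R - prev1) * (((f x).2)%:R - next2))%R.

End Dom.

Definition not_extreme n : pred (bs n) :=
  fun x => (x != [ffun => false]) && (x != [ffun => true]).

(* Main.v *)
Require Import Defs.
From mathcomp Require Import all_boot all_order all_algebra.
From mathcomp Require Import zify ring lra.
Import Order.TTheory GRing.Theory Num.Theory.
Set Implicit Arguments. Unset Strict Implicit. Unset Printing Implicit Defensive.

Lemma find_char (T : Type) (d : T) (p : pred T) (s : seq T) k :
  (k <= size s)%N -> (forall i, (i < k)%N -> ~~ p (nth d s i)) ->
  ((k < size s)%N -> p (nth d s k)) -> find p s = k.
Proof.
move=> ks hb ha.
have [lt|gt|eq] := ltngtP (find p s) k.
- have hs : has p s by rewrite has_find; lia.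
  by have := hb _ lt; rewrite nth_find.
- have := find_size p s => h.
  have /ha : (k < size s)%N by lia.
  by rewrite (before_find _ gt).
- by [].
Qed.

Section Bits.
Variable n : nat.

Lemma size_bits (x : bs n) : size (bits x) = n.
Proof. by rewrite /bits size_map size_enum_ord. Qed.

Lemma nth_bits (x : bs n) i (h : (i < n)%N) d : nth d (bits x) i = x (Ordinal h).
Proof.
rewrite /bits (nth_map (Ordinal h)) ?size_enum_ord //; congr (x _).
by apply: val_inj; rewrite /= nth_enum_ord.
Qed.

Lemma ones_card (x : bs n) : ones x = #|[set i | x i]|.
Proof.
rewrite /ones /bits count_map cardsE cardE /enum_mem size_filter count_filter.
by apply: eq_count => i; rewrite /= andbT.
Qed.

Lemma ones_le (x : bs n) : (ones x <= n)%N.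
Proof. by rewrite /ones -{2}(size_bits x) count_size. Qed.

Lemma hamming_sym (x y : bs n) : hamming_neighbour x y = hamming_neighbour y x.
Proof.
rewrite /hamming_neighbour; congr (_ == _); apply: eq_card => i; by rewrite !inE eq_sym.
Qed.

Lemma ne_false (x : bs n) : x != [ffun => false] -> exists i, x i.
Proof.
move=> ne; case: (boolP [exists i, x i]) => [/existsP//|/existsPn h].
move: ne; have -> : x = [ffun => false] by apply/ffunP => i; rewrite ffunE; apply/negbTE. by rewrite eqxx.
Qed.

Lemma ne_true (x : bs n) : x != [ffun => true] -> exists i, ~~ x i.
Proof.
move=> ne; case: (boolP [exists i, ~~ x i]) => [/existsP//|/existsPn h].
move: ne; have -> : x = [ffun => true] by apply/ffunP => i; rewrite ffunE; apply/negbNE.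
by rewrite eqxx.
Qed.

Definition flip (x : bs n) (i : 'I_n) : bs n := [ffun j => if j == i then ~~ x i else x j].

Lemma hamming_flip (x : bs n) i : hamming_neighbour x (flip x i).
Proof.
apply/cards1P; exists i; apply/setP => j; rewrite !inE ffunE.
by case: (eqVneq j i) => [->|]; [case: (x i)|rewrite eqxx].
Qed.

Lemma neighbour_flip (x w : bs n) : hamming_neighbour x w -> exists i, w = flip x i.
Proof.
move/cards1P => [i Hi]; exists i; apply/ffunP => j; rewrite ffunE.
have := congr1 (fun A : {set 'I_n} => j \in A) Hi; rewrite !inE.
case: (eqVneq j i) => [->|ne] /=.
  by case: (x i); case: (w i).
by move/negbT/negbNE/eqP.
Qed.

Lemma ones_flip_t (x : bs n) i : x i -> (ones (flip x i) + 1 = ones x)%N.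
Proof.
move=> xi; rewrite !ones_card (cardsD1 i [set j | x j]) inE xi.
have -> : [set j | flip x i j] = [set j | x j] :\ i.
  apply/setP => j; rewrite !inE ffunE; case: (eqVneq j i) => [->|] //=; by rewrite xi.
by rewrite addnC.
Qed.

Lemma ones_flip_f (x : bs n) i : ~~ x i -> ones (flip x i) = (ones x + 1)%N.
Proof.
move=> xi; rewrite !ones_card.
have -> : [set j | flip x i j] = i |: [set j | x j].
  apply/setP => j; rewrite !inE ffunE; case: (eqVneq j i) => [->|] //=; by rewrite xi.
by rewrite cardsU1 inE xi addnC.
Qed.

Lemma omm_pareto (x : bs n) : pareto (@OneMinMax n) x.
Proof.
apply/forallP => y; rewrite /dominates /OneMinMax /=.
have := ones_le x; have := ones_le y => h1 h2.
apply/negP => /and3P [a b /orP [c|c]]; lia.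
Qed.

Definition pk (k : nat) : bs n := [ffun i : 'I_n => (i < k)%N].

Lemma LO_pk k : (k <= n)%N -> LO (pk k) = k.
Proof.
move=> kn; rewrite /LO; apply: (@find_char _ false negb (bits (pk k)) k); rewrite ?size_bits //.
  move=> i ik; have h : (i < n)%N by lia.
  by rewrite (nth_bits _ h) ffunE /= ik.
by move=> kn'; rewrite (nth_bits _ kn') ffunE /= ltnn.
Qed.

Lemma TZ_pk k : (k <= n)%N -> TZ (pk k) = (n - k)%N.
Proof.
move=> kn; rewrite /TZ; apply: (@find_char _ false id (rev (bits (pk k))) (n - k)); rewrite ?size_rev ?size_bits; first lia.
  move=> i ik; rewrite nth_rev size_bits; last lia.
  have h : (n - i.+1 < n)%N by lia.
  by rewrite (nth_bits _ h) ffunE /=; apply/negP; lia.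
move=> h; rewrite nth_rev size_bits; last lia.
have h' : (n - (n - k).+1 < n)%N by lia.
by rewrite (nth_bits _ h') ffunE /=; lia.
Qed.

Lemma lotz_seq (s : seq bool) : (find negb s + find id (rev s) <= size s)%N.
Proof.
elim: s => [|b s IH] //=; case: b => /=.
  rewrite rev_cons -cats1 find_cat; case: ifP => h; first lia.
  move: IH; rewrite (hasNfind (negbT h)) !size_rev /=; lia.
by rewrite add0n (leq_trans (find_size _ _)) // size_rev.
Qed.

Lemma lotz_sum (x : bs n) : (LO x + TZ x <= n)%N.
Proof. by rewrite /LO /TZ; have := lotz_seq (bits x); rewrite size_bits. Qed.

Lemma LO_le (x : bs n) : (LO x <= n)%N.
Proof. by rewrite /LO -{2}(size_bits x) find_size. Qed.

Lemma pk_pareto k : (k <= n)%N -> pareto (@LOTZ n) (pk k).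
Proof.
move=> kn; apply/forallP => y; rewrite /dominates /LOTZ /= LO_pk // TZ_pk //.
have := lotz_sum y => h.
apply/negP => /and3P [a b /orP [c|c]]; lia.
Qed.

Lemma lotz_par (x : bs n) : pareto (@LOTZ n) x -> (LO x + TZ x = n)%N.
Proof.
move=> px; have := lotz_sum x; have := LO_le x => h1 h2.
case: (ltngtP (LO x + TZ x) n) => // lt; last lia.
move/forallP: px => /(_ (pk (LO x))); rewrite /dominates /LOTZ /= LO_pk // TZ_pk //.
rewrite leqnn /=; have -> : (TZ x <= n - LO x)%N by lia.
have -> : (TZ x < n - LO x)%N by lia.
by rewrite orbT.
Qed.

Lemma pareto_pk (x : bs n) : pareto (@LOTZ n) x -> x = pk (LO x).
Proof.
move=> px; have s := lotz_par px.
apply/ffunP => i; rewrite ffunE.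
case: (ltnP i (LO x)) => h.
  have := before_find false h; rewrite nth_bits /= => /negbFE.
  by have -> : Ordinal (ltn_ord i) = i by apply: val_inj.
have hj : (n - i.+1 < TZ x)%N by have := ltn_ord i; lia.
have := before_find false hj; rewrite nth_rev size_bits; last lia.
have e : (n - (n - i.+1).+1 = i)%N by have := ltn_ord i; lia.
rewrite e nth_bits /=.
by have -> : Ordinal (ltn_ord i) = i by apply: val_inj.
Qed.

Lemma ham_succ k (lt : (k < n)%N) : hamming_neighbour (pk k) (pk k.+1).
Proof.
apply/cards1P; exists (Ordinal lt); apply/setP => i; rewrite !inE !ffunE -val_eqE /=.
by rewrite ltnS; case: ltngtP.
Qed.

Lemma ham_far k m : (k.+2 <= m)%N -> (m <= n)%N -> ~~ hamming_neighbour (pk k) (pk m).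
Proof.
move=> km mn.
have l1 : (k < n)%N by lia.
have l2 : (k.+1 < n)%N by lia.
have : [set Ordinal l1; Ordinal l2] \subset [set i | pk k i != pk m i].
  apply/subsetP => i; rewrite !inE !ffunE -!val_eqE /= => /orP [] /eqP ->; lia.
move/subset_leq_card; rewrite cards2 -val_eqE /= => h.
rewrite /hamming_neighbour; apply/negP => /eqP e; move: h; rewrite e; lia.
Qed.

Lemma ham_refl (x : bs n) : ~~ hamming_neighbour x x.
Proof.
rewrite /hamming_neighbour; have -> : [set i | x i != x i] = set0.
  by apply/setP => i; rewrite !inE eqxx.
by rewrite cards0.
Qed.

End Bits.
Section Gen.
Variable R : realFieldType.
Variable n : nat.
Variable f : bs n -> nat * nat.
Variables r1 r2 : R.
Hypothesis hr1 : (r1 <= -1)%R.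
Hypothesis hr2 : (r2 <= -1)%R.

Definition prevv (x : bs n) (P : {set bs n}) : R :=
    match [pick y in P | ((f y).1 < (f x).1)%N &&
             [forall z in P, ((f z).1 < (f x).1)%N ==> ((f z).1 <= (f y).1)%N]] with
    | Some y => ((f y).1)%:R%R
    | None => r1
    end.
Definition nextv (x : bs n) (P : {set bs n}) : R :=
    match [pick y in P | ((f x).1 < (f y).1)%N &&
             [forall z in P, ((f x).1 < (f z).1)%N ==> ((f y).1 <= (f z).1)%N]] with
    | Some y => ((f y).2)%:R%R
    | None => r2
    end.

Lemma HVCE x P : HVC f r1 r2 x P =
  ((((f x).1)%:R - prevv x P) * (((f x).2)%:R - nextv x P))%R.
Proof. by []. Qed.

Lemma nondom_lt (P : {set bs n}) a b : valid_pop f P -> a \in P -> b \in P ->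
  ((f a).1 < (f b).1)%N -> ((f b).2 < (f a).2)%N.
Proof.
have H1 := hr1; have H2 := hr2.
move=> [nd _] aP bP lt; have := nd b a bP aP; rewrite /dominates lt (ltnW lt) /=.
lia.
Qed.

Lemma f1_inj (P : {set bs n}) a b : valid_pop f P -> a \in P -> b \in P ->
  (f a).1 = (f b).1 -> f a = f b.
Proof.
have H1 := hr1; have H2 := hr2.
move=> [nd _] aP bP e; have := nd a b aP bP; have := nd b a bP aP.
rewrite /dominates e leqnn ltnn /=; case: (f a) (f b) e => [a1 a2] [b1 b2] /= -> ; 
move=> h1 h2; congr pair; lia.
Qed.

Lemma natR_le (a b : nat) : (a <= b)%N -> (a%:R <= b%:R :> R)%R.
Proof. by rewrite ler_nat. Qed.

Lemma prev_ge1 (P : {set bs n}) x : x \in P -> (1 <= ((f x).1)%:R - prevv x P)%R.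
Proof.
have H1 := hr1; have H2 := hr2.
move=> xP; rewrite /prevv; case: pickP => [y /andP[yP /andP[lt _]] | _].
  have := natR_le lt; rewrite -addn1 natrD; lra.
have := ler0n R (f x).1; lra.
Qed.

Lemma next_ge1 (P : {set bs n}) x : valid_pop f P -> x \in P -> (1 <= ((f x).2)%:R - nextv x P)%R.
Proof.
have H1 := hr1; have H2 := hr2.
move=> vP xP; rewrite /nextv; case: pickP => [y /andP[yP /andP[lt _]] | _].
  have := natR_le (nondom_lt vP xP yP lt); rewrite -addn1 natrD; lra.
have := ler0n R (f x).2; lra.
Qed.

Lemma prev_eq1 (P : {set bs n}) x z : x \in P -> z \in P -> ((f z).1 + 1 = (f x).1)%N ->
  (((f x).1)%:R - prevv x P = 1)%R.
Proof.
have H1 := hr1; have H2 := hr2.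
move=> xP zP e; rewrite /prevv; case: pickP => [y /andP[yP /andP[lt /forallP H]] | H0].
  have := H z; rewrite zP /= => /implyP h.
  have {}h : ((f z).1 <= (f y).1)%N by apply: h; lia.
  have -> : (f x).1 = ((f y).1 + 1)%N by lia.
  rewrite natrD; lra.
exfalso; have := H0 z; rewrite zP /=.
have -> : ((f z).1 < (f x).1)%N by lia.
have -> // : [forall z0 in P, ((f z0).1 < (f x).1)%N ==> ((f z0).1 <= (f z).1)%N].
apply/forallP => u; apply/implyP => _; apply/implyP; lia.
Qed.

Lemma next_eq1 (P : {set bs n}) x z : valid_pop f P -> x \in P -> z \in P ->
  (f z).1 = ((f x).1 + 1)%N -> ((f z).1 + (f z).2 = n)%N -> ((f x).1 + (f x).2 = n)%N ->
  (((f x).2)%:R - nextv x P = 1)%R.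
Proof.
have H1 := hr1; have H2 := hr2.
move=> vP xP zP e s1 s2; rewrite /nextv; case: pickP => [y /andP[yP /andP[lt /forallP H]] | H0].
  have := H z; rewrite zP /= => /implyP h.
  have {}h : ((f y).1 <= (f z).1)%N by apply: h; lia.
  have ey : (f y).1 = (f z).1 by lia.
  have := f1_inj vP yP zP ey => ->.
  have -> : (f x).2 = ((f z).2 + 1)%N by lia.
  rewrite natrD; lra.
exfalso; have := H0 z; rewrite zP /=.
have -> : ((f x).1 < (f z).1)%N by lia.
have -> // : [forall z0 in P, ((f x).1 < (f z0).1)%N ==> ((f z).1 <= (f z0).1)%N].
apply/forallP => u; apply/implyP => _; apply/implyP; lia.
Qed.

Hypothesis Hsum : forall x, ((f x).1 + (f x).2 <= n)%N.

Lemma prev_ge2 (P : {set bs n}) y w : valid_pop f P -> y \in P ->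
  ((f w).1 + 1 = (f y).1)%N -> ((f w).1 + (f w).2 = n)%N -> ((f y).1 + (f y).2 = n)%N ->
  f w \notin [seq f z | z in P] ->
  (2 <= ((f y).1)%:R - prevv y P)%R.
Proof.
have H1 := hr1; have H2 := hr2.
move=> vP yP e s1 s2 nw; rewrite /prevv; case: pickP => [p /andP[pP /andP[lt _]] | _].
  have [eq|ne] := eqVneq (f p).1 (f w).1.
    have := nondom_lt vP pP yP lt; have := Hsum p => h1 h2.
    have efp : f p = f w.
      case E1: (f p) => [a b]; case E2: (f w) => [c d].
      rewrite E1 E2 /= in eq h1 h2 s1 e *; congr pair; lia.
    by move: nw; rewrite -efp map_f // mem_enum.
  have := natR_le (_ : ((f p).1 + 2 <= (f y).1)%N); rewrite natrD.
  move=> h; have := h ltac:(lia); lra.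
have := ler0n R (f w).1; rewrite -e natrD; lra.
Qed.

Lemma next_ge2 (P : {set bs n}) y w : valid_pop f P -> y \in P ->
  ((f w).1 = (f y).1 + 1)%N -> ((f w).1 + (f w).2 = n)%N -> ((f y).1 + (f y).2 = n)%N ->
  f w \notin [seq f z | z in P] ->
  (2 <= ((f y).2)%:R - nextv y P)%R.
Proof.
have H1 := hr1; have H2 := hr2.
move=> vP yP e s1 s2 nw; rewrite /nextv; case: pickP => [p /andP[pP /andP[lt _]] | _].
  have lt2 := nondom_lt vP yP pP lt; have := Hsum p => h1.
  have [eq|ne] := eqVneq (f p) (f w).
    by move: nw; rewrite -eq map_f // mem_enum.
  have : ((f p).2 + 2 <= (f y).2)%N.
    case E1: (f p) ne => [a b]; case E2: (f w) => [c d] ne.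
    rewrite E1 E2 /= in h1 lt lt2 e s1 *.
    move: ne; rewrite xpair_eqE negb_and => /orP[] /eqP ?; lia.
  move/natR_le; rewrite natrD; lra.
have := ler0n R (f w).2; have -> : (f y).2 = ((f w).2 + 1)%N by lia.
rewrite natrD; lra.
Qed.


Hypothesis Hpar : forall x, pareto f x -> ((f x).1 + (f x).2 = n)%N.
Hypothesis Hdown : forall x, pareto f x -> not_extreme x -> exists w,
  [/\ hamming_neighbour x w, pareto f w & ((f w).1 + 1 = (f x).1)%N].
Hypothesis Hup : forall x, pareto f x -> not_extreme x -> exists w,
  [/\ hamming_neighbour x w, pareto f w & (f w).1 = ((f x).1 + 1)%N].
Hypothesis Hnb : forall x w, pareto f x -> pareto f w -> hamming_neighbour x w ->
  ((f w).1 + 1 = (f x).1)%N \/ (f w).1 = ((f x).1 + 1)%N.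

Theorem gen : diversity_favouring f (HVC f r1 r2) (@not_extreme n).
Proof.
have H1 := hr1; have H2 := hr2.
move=> P vP x y xP yP px py nex ney [_ _ ngx] [_ _ [w [hw pw nw]]].
have [z1 [z1P ez1]] : exists z, z \in P /\ ((f z).1 + 1 = (f x).1)%N.
  have [w1 [h1 p1 e1]] := Hdown px nex.
  case: (boolP (f w1 \in [seq f z | z in P])) => [/mapP [z zin ez]| nin].
    by exists z; rewrite mem_enum in zin; split => //; rewrite -ez.
  by exfalso; apply: ngx; split => //; exists w1.
have [z2 [z2P ez2 sz2]] : exists z, [/\ z \in P, (f z).1 = ((f x).1 + 1)%N & ((f z).1 + (f z).2 = n)%N].
  have [w1 [h1 p1 e1]] := Hup px nex.
  case: (boolP (f w1 \in [seq f z | z in P])) => [/mapP [z zin ez]| nin].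
    by exists z; rewrite mem_enum in zin; split => //; rewrite -ez //; apply: Hpar.
  by exfalso; apply: ngx; split => //; exists w1.
rewrite !HVCE (prev_eq1 xP z1P ez1) (next_eq1 vP xP z2P ez2 sz2 (Hpar px)) mulr1.
case: (Hnb py pw hw) => e.
  have := prev_ge2 vP yP e (Hpar pw) (Hpar py) nw; have := next_ge1 vP yP.
  set a := (_ - _)%R; set b := (_ - _)%R; nra.
have := next_ge2 vP yP e (Hpar pw) (Hpar py) nw; have := prev_ge1 yP.
set a := (_ - _)%R; set b := (_ - _)%R; nra.
Qed.

End Gen.

Lemma pk_form n (x : bs n) : pareto (@LOTZ n) x -> exists k, (k <= n)%N /\ x = pk n k.
Proof. by move=> px; exists (LO x); split; [apply: LO_le | apply: pareto_pk]. Qed.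

Theorem lemma1 (R : realFieldType) (n : nat) (r1 r2 : R) :
  (r1 <= -1)%R -> (r2 <= -1)%R ->
  diversity_favouring (@OneMinMax n) (HVC (@OneMinMax n) r1 r2) (@not_extreme n) /\
  diversity_favouring (@LOTZ n) (HVC (@LOTZ n) r1 r2) (@not_extreme n).
Proof.
move=> hr1 hr2; split.
  apply: gen => //.
  - by move=> x; rewrite /OneMinMax /=; have := ones_le x; lia.
  - by move=> x _; rewrite /OneMinMax /=; have := ones_le x; lia.
  - move=> x _ /andP [nf _]; have [i xi] := ne_false nf.
    exists (flip x i); split; [exact: hamming_flip | exact: omm_pareto |].
    by rewrite /OneMinMax /= ones_flip_t.
  - move=> x _ /andP [_ nt]; have [i xi] := ne_true nt.
    exists (flip x i); split; [exact: hamming_flip | exact: omm_pareto |].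
    by rewrite /OneMinMax /= ones_flip_f.
  - move=> x w _ _ /neighbour_flip [i ->]; rewrite /OneMinMax /=.
    case: (boolP (x i)) => xi; [left; exact: ones_flip_t | right; exact: ones_flip_f].
apply: gen => //.
- by move=> x; exact: lotz_sum.
- by move=> x; exact: lotz_par.
- move=> x /pk_form [k [hk ->]] /andP [nf nt].
  have k0 : (0 < k)%N.
    case: (posnP k) => // k0'; move: nf; rewrite k0'.
    have -> : pk n 0 = [ffun => false] by apply/ffunP => i; rewrite !ffunE.
    by rewrite eqxx.
  have km : (k.-1 < n)%N by lia.
  exists (pk n k.-1); split.
  + by rewrite hamming_sym; have := ham_succ km; rewrite prednK.
  + by apply: pk_pareto; lia.
  + by rewrite /LOTZ /= !LO_pk //; lia.
- move=> x /pk_form [k [hk ->]] /andP [nf nt].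
  have kn : (k < n)%N.
    case: (ltngtP k n) => // h; first lia.
    move: nt; rewrite h.
    have -> : pk n n = [ffun => true] by apply/ffunP => i; rewrite !ffunE ltn_ord.
    by rewrite eqxx.
  exists (pk n k.+1); split.
  + exact: ham_succ.
  + exact: pk_pareto.
  + by rewrite /LOTZ /= !LO_pk //; lia.
- move=> x w /pk_form [k [hk ->]] /pk_form [m [hm ->]] hw.
  rewrite /LOTZ /= !LO_pk //.
  case: (ltngtP k m) => h.
  + case: (eqVneq m k.+1) => [->|ne]; first by right; lia.
    have hkm : (k.+2 <= m)%N by lia.
    by move: hw; rewrite (negbTE (ham_far hkm hm)).
  + case: (eqVneq k m.+1) => [->|ne]; first by left; lia.
    have hkm : (m.+2 <= k)%N by lia.
    by move: hw; rewrite hamming_sym (negbTE (ham_far hkm hk)).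
  + by move: hw; rewrite h (negbTE (ham_refl (pk n m))).
Qed.
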